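(* Let $\Gamma$ be a finitely generated discrete group with finite symmetric generating set $Q$, and let $Z\subseteq\mathrm{Sub}(\Gamma)$ be a uniformly recurrent subgroup of $\Gamma$. For any $H,H'\in Z$, the topological groupoids $\mathcal{G}_H$ and $\mathcal{G}_{H'}$ (defined in the context) are isomorphic.
   Context: Word length $l(\gamma)$ is taken with respect to $Q$. $\mathrm{Sub}(\Gamma)$ is the space of subgroups of $\Gamma$ with the topology of pointwise convergence of indicator functions, with $\Gamma$ acting by conjugation $\gamma.H=\gamma H\gamma^{-1}$. A uniformly recurrent subgroup (URS) is a nonempty closed $\Gamma$-invariant subset $Z\subseteq\mathrm{Sub}(\Gamma)$ on which every $\Gamma$-orbit is dense. For $H\le\Gamma$, the Schreier graph $S(H)=S_\Gamma^Q(H)$ is the rooted labeled graph with vertex set $\Gamma/H$, root $H$, and for each $\gamma H\in\Gamma/H$ and $q\in Q$ an edge from $\gamma H$ to $q\gamma H$ labeled $q$; $d$ is the shortest-path metric and $B_n(S,p)$ the ball of radius $n$ around a vertex $p$. Two rooted labeled balls are root-label isomorphic if there is a graph isomorphism between them preserving roots and labels (such an isomorphism is unique). Construction of $\mathcal{G}_H$ for $H\in Z$: write $S=S(H)$. For $p\in\Gamma/H$ and $n\ge 0$ let $[p]_n$ be the root-label isomorphism class of the rooted labeled ball $(B_n(S,p),p)$, and let $E_n=\{[p]_n: p\in\Gamma/H\}$ (a finite discrete set), with maps $E_{n+1}\to E_n$, $[p]_{n+1}\mapsto[p]_n$. Let $\mathcal{G}_H^0=\varprojlim E_n$. For $x=(x_n)\in\mathcal{G}_H^0$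 choose vertices $p_n\in\Gamma/H$ with $x_n=[p_n]_n$. The arrows of $\mathcal{G}_H$ are equivalence classes of pairs $(x,\gamma)$ with $x\in\mathcal{G}_H^0$, $\gamma\in\Gamma$, where $(x,\gamma)\sim(x,\gamma')$ iff $\gamma p_n=\gamma' p_n$ for all sufficiently large $n$ (independent of choices). Range $r(x,\gamma)=x$; source $s(x,\gamma)=\gamma.x$, where $(\gamma.x)_n=[\gamma p_{n+l(\gamma)}]_n$; product $(x,\gamma')(\gamma'.x,\gamma)=(x,\gamma\gamma')$; inverse $(x,\gamma)^{-1}=(\gamma.x,\gamma^{-1})$; units are $(x,e)$. The topology on $\mathcal{G}_H$ is generated by the sets $U_{c,\gamma}=\{(x,\gamma): x_N=c\}$ for $N\in\mathbb{N}$, $c\in E_N$, $\gamma\in\Gamma$ with $l(\gamma)\le N$. *)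

(* Defs.v *)
From Stdlib Require Import List Arith ClassicalEpsilon.
Import ListNotations.

Set Implicit Arguments.

Record Grp := {
  carrier :> Type;
  gmul : carrier -> carrier -> carrier;
  ginv : carrier -> carrier;
  gone : carrier;
  gmulA : forall a b c, gmul a (gmul b c) = gmul (gmul a b) c;
  gmul1 : forall a, gmul gone a = a;
  gmulV : forall a, gmul (ginv a) a = gone }.

Section Defs.
Context {G : Grp}.
Local Notation "a * b" := (gmul G a b).
Local Notation "a ^-1" := (ginv G a) (at level 3).
Local Notation e := (gone G).

Definition is_subgroup (K : G -> Prop) : Prop :=
  K e /\ (forall a b, K a -> K b -> K (a * b)) /\ (forall a, K a -> K (a^-1)).

Definition conjsub (g : G) (K : G -> Prop) : G -> Prop :=
  fun x => K (g^-1 * x * g).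

(** K and L have the same indicator function on the finite set F
    (basic neighbourhoods of the topology of pointwise convergence) *)
Definition agree_on (F : list G) (K L : G -> Prop) : Prop :=
  forall x, In x F -> (K x <-> L x).

Record URS (Z : (G -> Prop) -> Prop) : Prop := {
  urs_sub : forall K, Z K -> is_subgroup K;
  urs_nonempty : exists K, Z K;
  urs_closed : forall L, is_subgroup L ->
      (forall F : list G, exists K, Z K /\ agree_on F K L) -> Z L;
  urs_invariant : forall g K, Z K -> Z (conjsub g K);
  urs_dense : forall K L, Z K -> Z L ->
      forall F : list G, exists g, agree_on F (conjsub g K) L }.

Definition symmetric_set (Q : list G) : Prop :=
  forall q, In q Q -> In (q^-1) Q.

Definition word_prod (w : list G) : G := fold_right (fun a b => a * b) e w.

Definition generates (Q : list G) : Prop :=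
  forall g, exists w, incl w Q /\ word_prod w = g.

Definition wl_le (Q : list G) (g : G) (n : nat) : Prop :=
  exists w, incl w Q /\ length w <= n /\ word_prod w = g.

Definition wordlen (Q : list G) (g : G) : nat :=
  epsilon (inhabits 0) (fun k => wl_le Q g k /\ forall j, wl_le Q g j -> k <= j).

(** aH = bH *)
Definition coseq (H : G -> Prop) (a b : G) : Prop := H (a^-1 * b).

(** the vertex bH lies in the ball B_n(S(H), aH) (edges γH -> qγH, q ∈ Q) *)
Definition in_ball (Q : list G) (H : G -> Prop) (n : nat) (a b : G) : Prop :=
  exists w, incl w Q /\ length w <= n /\ coseq H (word_prod w * a) b.

(** The rooted labeled balls (B_n(S(H),aH), aH) and (B_n(S(H),a'H), a'H)
    (induced labeled subgraphs) are root-label isomorphic: phi induces a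
    bijection of vertex sets sending root to root, and the edge
    (u --q--> qu) is present in the first ball iff (phi u --q--> q phi u)
    is present in the second, with phi (qu) = q phi u. *)
Definition ball_iso (Q : list G) (H : G -> Prop) (n : nat) (a a' : G) : Prop :=
  exists phi : G -> G,
    (forall b c, in_ball Q H n a b -> in_ball Q H n a c ->
        (coseq H b c <-> coseq H (phi b) (phi c))) /\
    (forall b, in_ball Q H n a b -> in_ball Q H n a' (phi b)) /\
    (forall b', in_ball Q H n a' b' -> exists b, in_ball Q H n a b /\ coseq H (phi b) b') /\
    coseq H (phi a) a' /\
    (forall b q, in_ball Q H n a b -> In q Q -> in_ball Q H n a (q * b) ->
        coseq H (phi (q * b)) (q * phi b)) /\
    (forall b q, in_ball Q H n a b -> In q Q -> in_ball Q H n a' (q * phi b) ->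
        in_ball Q H n a (q * b)).

(** A point x = (x_n) of G_H^0 = lim E_n, given by representatives p_n
    with x_n = [p_n]_n; compatibility: [p_{n+1}]_n = [p_n]_n. *)
Definition unit_pt (Q : list G) (H : G -> Prop) (x : nat -> G) : Prop :=
  forall n, ball_iso Q H n (x (S n)) (x n).

Definition ueq (Q : list G) (H : G -> Prop) (x y : nat -> G) : Prop :=
  forall n, ball_iso Q H n (x n) (y n).

Definition Arrow : Type := ((nat -> G) * G)%type.

Definition arr_valid Q H (a : Arrow) : Prop := unit_pt Q H (fst a).

Definition arr_eq Q H (a b : Arrow) : Prop :=
  ueq Q H (fst a) (fst b) /\
  exists N, forall n, N <= n -> coseq H (snd a * fst a n) (snd b * fst a n).

Definition act_pt (Q : list G) (g : G) (x : nat -> G) : nat -> G :=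
  fun n => g * x (n + wordlen Q g).

Definition arr_r (a : Arrow) : nat -> G := fst a.
Definition arr_s Q (a : Arrow) : nat -> G := act_pt Q (snd a) (fst a).

Definition composable Q H (a b : Arrow) : Prop := ueq Q H (arr_s Q a) (arr_r b).

(** (x,γ')(γ'.x,γ) = (x,γγ') *)
Definition arr_mul (a b : Arrow) : Arrow := (fst a, snd b * snd a).

(** subbasic open set U_{c,γ} with c = [p]_N *)
Definition in_U Q H (p : G) (N : nat) (g : G) (a : Arrow) : Prop :=
  exists y, unit_pt Q H y /\ ball_iso Q H N (y N) p /\ arr_eq Q H a (y, g).

Definition is_open Q H (O : Arrow -> Prop) : Prop :=
  forall a, arr_valid Q H a -> O a ->
    exists B : list (G * nat * G),
      (forall t, In t B -> wordlen Q (snd t) <= snd (fst t) /\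
                            in_U Q H (fst (fst t)) (snd (fst t)) (snd t) a) /\
      (forall b, arr_valid Q H b ->
         (forall t, In t B -> in_U Q H (fst (fst t)) (snd (fst t)) (snd t) b) -> O b).

Definition groupoid_top_iso (Q : list G) (H H' : G -> Prop) : Prop :=
  exists F : Arrow -> Arrow,
    (forall a, arr_valid Q H a -> arr_valid Q H' (F a)) /\
    (forall a b, arr_valid Q H a -> arr_valid Q H b ->
        (arr_eq Q H a b <-> arr_eq Q H' (F a) (F b))) /\
    (forall a', arr_valid Q H' a' -> exists a, arr_valid Q H a /\ arr_eq Q H' (F a) a') /\
    (forall a b, arr_valid Q H a -> arr_valid Q H b ->
        (composable Q H a b <-> composable Q H' (F a) (F b))) /\
    (forall a b, arr_valid Q H a -> arr_valid Q H b -> composable Q H a b ->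
        arr_eq Q H' (F (arr_mul a b)) (arr_mul (F a) (F b))) /\
    (forall O, is_open Q H' O -> is_open Q H (fun a => O (F a))) /\
    (forall O, is_open Q H O ->
        is_open Q H' (fun a' => exists a, arr_valid Q H a /\ O a /\ arr_eq Q H' (F a) a')).

End Defs.

(* Main.v *)
Require Import Defs.
From Stdlib Require Import List Arith Lia ClassicalEpsilon Classical.
Import ListNotations.

Local Infix "**" := (gmul _) (at level 40, left associativity).
Local Notation "a ^-1" := (ginv _ a) (at level 3).

Lemma g_mulVr {G : Grp} (a : G) : a ** a^-1 = gone G.
Proof.
  rewrite <- (gmul1 G (a ** a^-1)).
  rewrite <- (gmulV G (a^-1)) at 1.
  rewrite <- gmulA. rewrite (gmulA _ (a^-1) a (a^-1)).
  rewrite gmulV, gmul1. apply gmulV.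
Qed.

Lemma g_mul1r {G : Grp} (a : G) : a ** gone G = a.
Proof. rewrite <- (gmulV G a), gmulA, g_mulVr, gmul1. reflexivity. Qed.

Lemma g_invK {G : Grp} (a : G) : (a^-1)^-1 = a.
Proof.
  rewrite <- (g_mul1r ((a^-1)^-1)), <- (gmulV G a), gmulA, gmulV, gmul1. reflexivity.
Qed.

Lemma g_linv_uniq {G : Grp} (x c : G) : x ** c = gone G -> x = c^-1.
Proof.
  intro h. rewrite <- (g_mul1r x), <- (g_mulVr c), gmulA, h, gmul1. reflexivity.
Qed.

Lemma g_invM {G : Grp} (a b : G) : (a ** b)^-1 = b^-1 ** a^-1.
Proof.
  symmetry. apply g_linv_uniq.
  rewrite <- gmulA, (gmulA _ (a^-1)), gmulV, gmul1, gmulV. reflexivity.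
Qed.

Lemma g_cancel {G : Grp} (a b : G) : a^-1 ** (a ** b) = b.
Proof. rewrite gmulA, gmulV, gmul1. reflexivity. Qed.


Lemma cs_refl {G : Grp} (K : G -> Prop) a : is_subgroup K -> coseq K a a.
Proof. intros [h _]. unfold coseq. rewrite gmulV. exact h. Qed.

Lemma cs_sym {G : Grp} (K : G -> Prop) a b : is_subgroup K -> coseq K a b -> coseq K b a.
Proof.
  intros [_ [_ hi]] h. unfold coseq in *. apply hi in h.
  rewrite g_invM, g_invK in h. exact h.
Qed.

Lemma cs_trans {G : Grp} (K : G -> Prop) a b c : is_subgroup K ->
  coseq K a b -> coseq K b c -> coseq K a c.
Proof.
  intros [_ [hm _]] h1 h2. unfold coseq in *. pose proof (hm _ _ h1 h2) as h.
  rewrite gmulA, <- (gmulA _ (a^-1) b), g_mulVr, g_mul1r in h. exact h.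
Qed.

Lemma cs_lmul {G : Grp} (K : G -> Prop) g a b :
  coseq K (g ** a) (g ** b) <-> coseq K a b.
Proof.
  unfold coseq. rewrite g_invM, <- gmulA, g_cancel. tauto.
Qed.

Lemma cs_resp {G : Grp} (K : G -> Prop) a a' b b' : is_subgroup K ->
  coseq K a a' -> coseq K b b' -> (coseq K a b <-> coseq K a' b').
Proof.
  intros hK h1 h2. split; intro h.
  - apply (cs_trans K _ a _ hK); [apply cs_sym; auto|]. apply (cs_trans K _ b _ hK); auto.
  - apply (cs_trans K _ a' _ hK); auto. apply (cs_trans K _ b' _ hK); auto. apply cs_sym; auto.
Qed.

Lemma wp_app {G : Grp} (w u : list G) : word_prod (w ++ u) = word_prod w ** word_prod u.
Proof.
  induction w as [|q w IH]; simpl.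
  - rewrite gmul1. reflexivity.
  - rewrite IH, gmulA. reflexivity.
Qed.

Definition Cx {G : Grp} (Q : list G) (K K' : G -> Prop) n (a a' : G) : Prop :=
  forall w v, incl w Q -> incl v Q -> length w <= S n -> length v <= n ->
    (coseq K (word_prod w ** a) (word_prod v ** a) <->
     coseq K' (word_prod w ** a') (word_prod v ** a')).

Lemma Cx_refl {G : Grp} Q (K : G -> Prop) n a : Cx Q K K n a a.
Proof. intros w v _ _ _ _. tauto. Qed.

Lemma Cx_sym {G : Grp} Q (K K' : G -> Prop) n a a' : Cx Q K K' n a a' -> Cx Q K' K n a' a.
Proof. intros C w v h1 h2 h3 h4. symmetry. apply C; auto. Qed.

Lemma Cx_trans {G : Grp} Q (K1 K2 K3 : G -> Prop) n a b c :
  Cx Q K1 K2 n a b -> Cx Q K2 K3 n b c -> Cx Q K1 K3 n a c.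
Proof. intros C1 C2 w v h1 h2 h3 h4. rewrite (C1 w v), (C2 w v); auto; tauto. Qed.

Lemma Cx_mono {G : Grp} Q (K K' : G -> Prop) n m a a' : n <= m ->
  Cx Q K K' m a a' -> Cx Q K K' n a a'.
Proof. intros hnm C w v h1 h2 h3 h4. apply C; auto; lia. Qed.

Lemma Cx_shift {G : Grp} Q (K K' : G -> Prop) n m l g a a' :
  Cx Q K K' m a a' -> wl_le Q g l -> n + l <= m -> Cx Q K K' n (g ** a) (g ** a').
Proof.
  intros C [u [iu [lu eu]]] hl w v h1 h2 h3 h4. subst g.
  rewrite !gmulA, <- !wp_app. apply C.
  - apply incl_app; auto.
  - apply incl_app; auto.
  - rewrite length_app. lia.
  - rewrite length_app. lia.
Qed.

Lemma Cx_cs {G : Grp} Q (K K' : G -> Prop) n s g a a' :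
  Cx Q K K' n a a' -> wl_le Q s n -> wl_le Q g n ->
  (coseq K (s ** a) (g ** a) <-> coseq K' (s ** a') (g ** a')).
Proof.
  intros C [u [iu [lu eu]]] [u' [iu' [lu' eu']]]. subst s g.
  apply C; auto.
Qed.

Definition rep {G : Grp} (Q : list G) (K : G -> Prop) n (a b : G) : list G :=
  epsilon (inhabits (@nil G))
    (fun w => incl w Q /\ length w <= n /\ coseq K (word_prod w ** a) b).

Lemma rep_spec {G : Grp} Q (K : G -> Prop) n (a b : G) : in_ball Q K n a b ->
  let w := rep Q K n a b in incl w Q /\ length w <= n /\ coseq K (word_prod w ** a) b.
Proof. intro h. unfold rep. apply epsilon_spec. exact h. Qed.

Lemma Cx_ball {G : Grp} Q (K : G -> Prop) n a a' : is_subgroup K ->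
  Cx Q K K n a a' -> ball_iso Q K n a a'.
Proof.
  intros HK C.
  exists (fun b => word_prod (rep Q K n a b) ** a').
  pose proof (fun b hb => rep_spec Q K n a b hb) as RS. simpl in RS.
  assert (hba : in_ball Q K n a a).
  { exists []. simpl. rewrite gmul1. split; [intros x []|split; [simpl; lia| apply cs_refl; auto]]. }
  split; [|split; [|split; [|split; [|split]]]].
  - intros b c hb hc. destruct (RS b hb) as [i1 [l1 c1]]. destruct (RS c hc) as [i2 [l2 c2]].
    rewrite <- (C _ _ i1 i2 (le_S _ _ l1) l2). apply cs_resp; auto; apply cs_sym; auto.
  - intros b hb. destruct (RS b hb) as [i1 [l1 _]]. exists (rep Q K n a b).
    split; [auto|split; [auto|apply cs_refl; auto]].
  - intros b' [w [iw [lw cw]]]. assert (hb : in_ball Q K n a (word_prod w ** a)).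
    { exists w. split; [auto|split; [auto|apply cs_refl; auto]]. }
    exists (word_prod w ** a). split; [exact hb|].
    destruct (RS _ hb) as [i1 [l1 c1]].
    apply cs_trans with (word_prod w ** a'); auto.
    apply (C _ _ i1 iw (le_S _ _ l1) lw). exact c1.
  - destruct (RS _ hba) as [i1 [l1 c1]].
    assert (h := C _ [] i1 (fun x (hx : In x []) => match hx with end) (le_S _ _ l1) (Nat.le_0_l _)).
    simpl in h. rewrite !gmul1 in h. apply h. exact c1.
  - intros b q hb hq hqb.
    destruct (RS b hb) as [i0 [l0 c0]]. destruct (RS _ hqb) as [i1 [l1 c1]].
    set (r0 := rep Q K n a b) in *. set (r1 := rep Q K n a (q ** b)) in *.
    assert (iq : incl (q :: r0) Q) by (apply incl_cons; auto).
    assert (lq : length (q :: r0) <= S n) by (simpl; lia).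
    assert (h := C _ _ iq i1 lq l1). simpl in h. rewrite <- !gmulA in h.
    apply cs_sym; auto. apply h.
    apply cs_trans with (q ** b); auto.
    + apply (proj2 (cs_lmul K q _ _)). auto.
    + apply cs_sym; auto.
  - intros b q hb hq [v [iv [lv cv]]].
    destruct (RS b hb) as [i0 [l0 c0]].
    set (r0 := rep Q K n a b) in *.
    assert (iq : incl (q :: r0) Q) by (apply incl_cons; auto).
    assert (lq : length (q :: r0) <= S n) by (simpl; lia).
    assert (h := C _ _ iq iv lq lv). simpl in h. rewrite <- !gmulA in h.
    exists v. split; [auto|split; [auto|]].
    apply cs_sym; auto. apply cs_trans with (q ** (word_prod r0 ** a)); auto.
    + apply (proj2 (cs_lmul K q _ _)). apply cs_sym; auto.
    + apply h. apply cs_sym; auto.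
Qed.

Lemma ball_Cx {G : Grp} Q (K : G -> Prop) n a a' : is_subgroup K ->
  ball_iso Q K n a a' -> Cx Q K K n a a'.
Proof.
  intros HK [phi [c1 [c2 [c3 [c4 [c5 c6]]]]]].
  assert (P : forall w, incl w Q -> length w <= n ->
             coseq K (phi (word_prod w ** a)) (word_prod w ** a')).
  { induction w as [|q w IH]; intros iw lw.
    - simpl. rewrite !gmul1. exact c4.
    - assert (hq : In q Q) by (apply iw; left; auto).
      assert (iw' : incl w Q) by (intros x hx; apply iw; right; auto).
      simpl in lw |- *. rewrite <- !gmulA.
      assert (hb : in_ball Q K n a (word_prod w ** a)).
      { exists w. split; [auto|split; [lia|apply cs_refl; auto]]. }
      assert (hqb : in_ball Q K n a (q ** (word_prod w ** a))).
      { exists (q :: w). split; [auto|split; [simpl; lia|]]. simpl. rewrite <- gmulA. apply cs_refl; auto. }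
      apply cs_trans with (q ** phi (word_prod w ** a)); auto.
      apply (proj2 (cs_lmul K q _ _)). apply IH; auto; lia. }
  assert (inb : forall v, incl v Q -> length v <= n -> in_ball Q K n a (word_prod v ** a)).
  { intros v iv lv. exists v. split; [auto|split; [auto|apply cs_refl; auto]]. }
  intros w v iw iv lw lv.
  destruct w as [|q w0].
  - rewrite (c1 _ _ (inb [] iw (Nat.le_0_l _)) (inb v iv lv)).
    apply cs_resp; auto; apply P; auto; simpl; lia.
  - assert (hq : In q Q) by (apply iw; left; auto).
    assert (iw0 : incl w0 Q) by (intros x hx; apply iw; right; auto).
    simpl in lw. assert (lw0 : length w0 <= n) by lia.
    simpl. rewrite <- !gmulA.
    set (b := word_prod w0 ** a).
    assert (hb : in_ball Q K n a b) by (apply inb; auto).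
    assert (claim : in_ball Q K n a (q ** b) ->
      (coseq K (q ** b) (word_prod v ** a) <-> coseq K (q ** (word_prod w0 ** a')) (word_prod v ** a'))).
    { intro hqb. rewrite (c1 _ _ hqb (inb v iv lv)). apply cs_resp; auto.
      apply cs_trans with (q ** phi b); auto.
      apply (proj2 (cs_lmul K q _ _)). apply P; auto. }
    split; intro h.
    + apply claim; auto. exists v. split; [auto|split; [auto|apply cs_sym; auto]].
    + apply claim; auto. apply (c6 b q hb hq).
      exists v. split; [auto|split; [auto|]]. apply cs_sym; auto.
      apply cs_trans with (q ** (word_prod w0 ** a')); auto.
      apply (proj2 (cs_lmul K q _ _)). apply P; auto.
Qed.

Lemma BI_Cx {G : Grp} Q (K : G -> Prop) n a a' : is_subgroup K ->
  ball_iso Q K n a a' <-> Cx Q K K n a a'.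
Proof. intro HK. split; [apply ball_Cx|apply Cx_ball]; auto. Qed.

Fixpoint words {G : Grp} (Q : list G) (k : nat) : list (list G) :=
  match k with
  | 0 => [[]]
  | S k => [] :: flat_map (fun q => map (cons q) (words Q k)) Q
  end.

Lemma words_complete {G : Grp} (Q : list G) k w : incl w Q -> length w <= k -> In w (words Q k).
Proof.
  revert w; induction k as [|k IH]; intros w iw lw.
  - destruct w; simpl in *; [auto|lia].
  - destruct w as [|q w]; simpl; [auto|right].
    apply in_flat_map. exists q. split; [apply iw; left; auto|].
    apply in_map. apply IH; [intros x hx; apply iw; right; auto|simpl in lw; lia].
Qed.

Lemma conj_eq {G : Grp} (x y a : G) : (x ** a)^-1 ** (y ** a) = a^-1 ** (x^-1 ** y) ** a.
Proof. rewrite g_invM, !gmulA. reflexivity. Qed.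

Lemma Cx_exists {G : Grp} Q (Z : (G -> Prop) -> Prop) (HZ : URS Z) K K' :
  Z K -> Z K' -> forall n a, exists a', Cx Q K K' n a a'.
Proof.
  intros ZK ZK' n a.
  set (F := map (fun p => (word_prod (fst p))^-1 ** word_prod (snd p))
                (list_prod (words Q (S n)) (words Q n))).
  destruct (urs_dense HZ K' (conjsub a K) ZK' (urs_invariant HZ a K ZK) F) as [g hg].
  exists g. intros w v iw iv lw lv. unfold coseq. rewrite !conj_eq.
  assert (hin : In ((word_prod w)^-1 ** word_prod v) F).
  { unfold F. apply (in_map (fun p => (word_prod (fst p))^-1 ** word_prod (snd p)) _ (w, v)).
    apply in_prod; apply words_complete; auto. }
  specialize (hg _ hin). unfold conjsub in hg. tauto.
Qed.

Lemma min_exists (P : nat -> Prop) : (exists k, P k) -> exists k, P k /\ forall j, P j -> k <= j.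
Proof.
  intros [k hk]. revert hk. induction k as [k IH] using lt_wf_ind. intro hk.
  destruct (classic (exists j, P j /\ j < k)) as [[j [hj lj]]|hn].
  - exact (IH j lj hj).
  - exists k. split; auto. intros j hj. destruct (le_lt_dec k j); auto.
    exfalso; apply hn; eauto.
Qed.

Lemma wordlen_spec {G : Grp} (Q : list G) g : generates Q -> wl_le Q g (wordlen Q g).
Proof.
  intro hg. unfold wordlen.
  assert (h : exists k, wl_le Q g k /\ forall j, wl_le Q g j -> k <= j).
  { apply min_exists. destruct (hg g) as [w [iw ew]]. exists (length w), w. auto. }
  exact (proj1 (epsilon_spec _ _ h)).
Qed.

Lemma wl_mono {G : Grp} (Q : list G) g k m : wl_le Q g k -> k <= m -> wl_le Q g m.
Proof. intros [w [iw [lw ew]]] h. exists w. split; [auto|split; [lia|auto]]. Qed.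

Definition tr {G : Grp} (Q : list G) (K K' : G -> Prop) n (a : G) : G :=
  epsilon (inhabits a) (fun a' => Cx Q K K' n a a').

Lemma tr_ok {G : Grp} Q (Z : (G -> Prop) -> Prop) (HZ : URS Z) K K' :
  Z K -> Z K' -> forall n a, Cx Q K K' n a (tr Q K K' n a).
Proof. intros ZK ZK' n a. unfold tr. apply epsilon_spec. apply (Cx_exists Q Z HZ K K' ZK ZK'). Qed.

Lemma bi_transfer {G : Grp} Q (K K' : G -> Prop) n a a' b b' :
  is_subgroup K -> is_subgroup K' ->
  Cx Q K K' n a a' -> Cx Q K K' n b b' -> (ball_iso Q K n a b <-> ball_iso Q K' n a' b').
Proof.
  intros HK HK' C1 C2. rewrite (BI_Cx Q K), (BI_Cx Q K'); auto. split; intro C.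
  - apply (Cx_trans Q K' K K' n a' a b'); [apply Cx_sym; auto|].
    apply (Cx_trans Q K K K' n a b b'); auto.
  - apply (Cx_trans Q K K' K n a a' b); auto. apply (Cx_trans Q K' K' K n a' b' b); auto. apply Cx_sym; auto.
Qed.

Lemma BI_refl {G : Grp} Q (K : G -> Prop) n a : is_subgroup K -> ball_iso Q K n a a.
Proof. intro HK. apply (BI_Cx Q K); auto. apply Cx_refl. Qed.

Lemma BI_sym {G : Grp} Q (K : G -> Prop) n a b : is_subgroup K -> ball_iso Q K n a b -> ball_iso Q K n b a.
Proof. intros HK h. apply (BI_Cx Q K) in h; auto. apply (BI_Cx Q K); auto. apply Cx_sym; auto. Qed.

Lemma BI_trans {G : Grp} Q (K : G -> Prop) n a b c : is_subgroup K ->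
  ball_iso Q K n a b -> ball_iso Q K n b c -> ball_iso Q K n a c.
Proof.
  intros HK h1 h2. apply (BI_Cx Q K) in h1; apply (BI_Cx Q K) in h2; auto.
  apply (BI_Cx Q K); auto. eapply Cx_trans; eauto.
Qed.

Definition evcs {G : Grp} (K : G -> Prop) (s g : G) (x : nat -> G) : Prop :=
  exists N, forall n, N <= n -> coseq K (s ** x n) (g ** x n).

Lemma ev_transfer {G : Grp} Q (K K' : G -> Prop) s g x y : generates Q ->
  (forall n, Cx Q K K' n (x n) (y n)) -> (evcs K s g x <-> evcs K' s g y).
Proof.
  intros hg C.
  assert (key : forall n, wordlen Q s <= n -> wordlen Q g <= n ->
     (coseq K (s ** x n) (g ** x n) <-> coseq K' (s ** y n) (g ** y n))).
  { intros n h1 h2. apply (Cx_cs Q K K' n); auto; [apply (wl_mono Q s (wordlen Q s))|apply (wl_mono Q g (wordlen Q g))]; auto; apply wordlen_spec; auto. }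
  split; intros [N hN]; exists (N + wordlen Q s + wordlen Q g); intros n hn.
  - apply key; try lia. apply hN; lia.
  - apply key; try lia. apply hN; lia.
Qed.

Lemma valid_tr {G : Grp} Q (K K' : G -> Prop) (x : nat -> G) :
  is_subgroup K -> is_subgroup K' ->
  (forall n a, Cx Q K K' n a (tr Q K K' n a)) ->
  unit_pt Q K x -> unit_pt Q K' (fun n => tr Q K K' n (x n)).
Proof.
  intros SK SK' T hx n.
  apply (bi_transfer Q K K' n (x (S n)) _ (x n) _); auto.
  apply Cx_mono with (S n); auto.
Qed.

Definition Fm {G : Grp} Q (K K' : G -> Prop) (a : @Arrow G) : @Arrow G :=
  (fun n => tr Q K K' n (fst a n), snd a).

Lemma open_pre {G : Grp} Q (K K' : G -> Prop) : generates Q ->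
  is_subgroup K -> is_subgroup K' ->
  (forall n a, Cx Q K K' n a (tr Q K K' n a)) ->
  (forall n a, Cx Q K' K n a (tr Q K' K n a)) ->
  forall O, is_open Q K' O -> is_open Q K (fun a => O (Fm Q K K' a)).
Proof.
  intros hg SK SK' T T' O HO [xa sa] va Oa.
  destruct (HO (Fm Q K K' (xa, sa)) (valid_tr Q K K' xa SK SK' T va) Oa) as [B' [HB1 HB2]].
  exists (map (fun t => (tr Q K' K (snd (fst t)) (fst (fst t)), snd (fst t), snd t)) B').
  split.
  - intros t Ht. apply in_map_iff in Ht. destruct Ht as [[[p' N] g] [<- Ht]]. simpl.
    destruct (HB1 _ Ht) as [hl hU]. simpl in hl, hU. split; auto.
    destruct hU as [y' [vy' [bi [ue ev]]]]. simpl in ue, ev.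
    exists xa. split; [exact va|split].
    + apply (bi_transfer Q K K' N _ (tr Q K K' N (xa N)) _ p'); auto.
      * apply Cx_sym; auto.
      * apply BI_trans with (y' N); auto.
    + split; [intro n; apply BI_refl; auto|]. simpl.
      change (evcs K sa g xa). apply (ev_transfer Q K K' sa g xa (fun n => tr Q K K' n (xa n))); auto.
  - intros [xb sb] vb Hall. apply HB2; [apply (valid_tr Q K K' xb SK SK' T vb)|].
    intros [[p' N] g] Ht.
    assert (h := Hall _ (in_map (fun t => (tr Q K' K (snd (fst t)) (fst (fst t)), snd (fst t), snd t)) _ _ Ht)).
    simpl in h. destruct h as [y [vy [bi [ue ev]]]]. simpl in ue, ev.
    exists (fun n => tr Q K K' n (xb n)). split; [apply (valid_tr Q K K' xb SK SK' T vb)|split].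
    + apply (bi_transfer Q K K' N (xb N) _ (tr Q K' K N p') p'); auto.
      * apply Cx_sym; auto.
      * apply BI_trans with (y N); auto.
    + split; [intro n; apply BI_refl; auto|]. simpl.
      change (evcs K' sb g (fun n => tr Q K K' n (xb n))).
      apply (ev_transfer Q K K' sb g xb (fun n => tr Q K K' n (xb n))); auto.
Qed.

Lemma surj_eq {G : Grp} Q (K K' : G -> Prop) : 
  is_subgroup K -> is_subgroup K' ->
  (forall n a, Cx Q K K' n a (tr Q K K' n a)) ->
  (forall n a, Cx Q K' K n a (tr Q K' K n a)) ->
  forall xd sd, arr_eq Q K' (Fm Q K K' ((fun n => tr Q K' K n (xd n)), sd)) (xd, sd).
Proof.
  intros SK SK' T T' xd sd. split; simpl.
  - intro n. apply (BI_Cx Q K'); auto. apply Cx_sym.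
    apply (Cx_trans Q K' K K' n _ (tr Q K' K n (xd n))); auto.
  - exists 0. intros; apply cs_refl; auto.
Qed.

Lemma open_img {G : Grp} Q (K K' : G -> Prop) : generates Q ->
  is_subgroup K -> is_subgroup K' ->
  (forall n a, Cx Q K K' n a (tr Q K K' n a)) ->
  (forall n a, Cx Q K' K n a (tr Q K' K n a)) ->
  forall O, is_open Q K O ->
  is_open Q K' (fun a' => exists a, arr_valid Q K a /\ O a /\ arr_eq Q K' (Fm Q K K' a) a').
Proof.
  intros hg SK SK' T T' O HO [xc sc] vc [[xa sa] [va [Oa Ea]]].
  destruct (HO _ va Oa) as [B [HB1 HB2]].
  destruct Ea as [ueA evA]; simpl in ueA, evA.
  exists (map (fun t => (tr Q K K' (snd (fst t)) (fst (fst t)), snd (fst t), snd t)) B).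
  split.
  - intros t Ht. apply in_map_iff in Ht. destruct Ht as [[[p N] g] [<- Ht]]. simpl.
    destruct (HB1 _ Ht) as [hl hU]. simpl in hl, hU. split; auto.
    destruct hU as [y [vy [bi [ue ev]]]]. simpl in ue, ev.
    exists xc. split; [exact vc|split].
    + apply BI_trans with (tr Q K K' N (xa N)); auto.
      * apply BI_sym; auto.
      * apply (bi_transfer Q K K' N (xa N) _ p _); auto.
        apply BI_trans with (y N); auto.
    + split; [intro n; apply BI_refl; auto|]. simpl.
      change (evcs K' sc g xc).
      assert (e1 : evcs K' sa g (fun n => tr Q K K' n (xa n))).
      { apply (ev_transfer Q K K' sa g xa); auto. }
      assert (e2 : evcs K' sc g (fun n => tr Q K K' n (xa n))).
      { destruct e1 as [N1 h1]. destruct evA as [N2 h2]. exists (N1 + N2). intros n hn.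
        apply cs_trans with (sa ** tr Q K K' n (xa n)); auto.
        - apply cs_sym; auto. apply h2; lia.
        - apply h1; lia. }
      apply (ev_transfer Q K' K' sc g (fun n => tr Q K K' n (xa n)) xc); auto.
      intro n. apply (BI_Cx Q K'); auto.
  - intros [xd sd] vd Hall. exists ((fun n => tr Q K' K n (xd n)), sd).
    split; [apply (valid_tr Q K' K xd SK' SK T' vd)|split].
    + apply HB2; [apply (valid_tr Q K' K xd SK' SK T' vd)|].
      intros [[p N] g] Ht.
      assert (h := Hall _ (in_map (fun t => (tr Q K K' (snd (fst t)) (fst (fst t)), snd (fst t), snd t)) _ _ Ht)).
      simpl in h. destruct h as [y' [vy' [bi [ue ev]]]]. simpl in ue, ev.
      exists (fun n => tr Q K' K n (xd n)). split; [apply (valid_tr Q K' K xd SK' SK T' vd)|split].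
      * apply (bi_transfer Q K K' N _ (xd N) p (tr Q K K' N p)); auto.
        -- apply Cx_sym; auto.
        -- apply BI_trans with (y' N); auto.
      * split; [intro n; apply BI_refl; auto|]. simpl.
        change (evcs K sd g (fun n => tr Q K' K n (xd n))).
        apply (proj2 (ev_transfer Q K K' sd g (fun n => tr Q K' K n (xd n)) xd hg (fun n => Cx_sym _ _ _ _ _ _ (T' n (xd n))))).
        exact ev.
    + apply surj_eq; auto.
Qed.

Lemma ueq_transfer {G : Grp} Q (K K' : G -> Prop) x x' y y' :
  is_subgroup K -> is_subgroup K' ->
  (forall n, Cx Q K K' n (x n) (x' n)) -> (forall n, Cx Q K K' n (y n) (y' n)) ->
  (ueq Q K x y <-> ueq Q K' x' y').
Proof.
  intros SK SK' C1 C2. unfold ueq. split; intros h n.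
  - apply (proj1 (bi_transfer Q K K' n _ _ _ _ SK SK' (C1 n) (C2 n))); auto.
  - apply (proj2 (bi_transfer Q K K' n _ _ _ _ SK SK' (C1 n) (C2 n))); auto.
Qed.

Theorem proposition3p2 (G : Grp) (Q : list G)
  (HQsym : symmetric_set Q) (HQgen : generates Q)
  (Z : (G -> Prop) -> Prop) (HZ : URS Z)
  (H H' : G -> Prop) (HH : Z H) (HH' : Z H') :
  groupoid_top_iso Q H H'.
Proof.
  assert (SH : is_subgroup H) by (apply (urs_sub HZ); auto).
  assert (SH' : is_subgroup H') by (apply (urs_sub HZ); auto).
  pose proof (tr_ok Q Z HZ H H' HH HH') as T.
  pose proof (tr_ok Q Z HZ H' H HH' HH) as T'.
  exists (Fm Q H H').
  split; [|split; [|split; [|split; [|split; [|split]]]]].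
  - intros [xa sa] va. exact (valid_tr Q H H' xa SH SH' T va).
  - intros [xa sa] [xb sb] _ _. unfold arr_eq; simpl.
    rewrite (ueq_transfer Q H H' xa (fun n => tr Q H H' n (xa n)) xb (fun n => tr Q H H' n (xb n))); auto.
    pose proof (ev_transfer Q H H' sa sb xa (fun n => tr Q H H' n (xa n)) HQgen (fun n => T n (xa n))) as E.
    unfold evcs in E. tauto.
  - intros [xd sd] vd. exists ((fun n => tr Q H' H n (xd n)), sd). split.
    + exact (valid_tr Q H' H xd SH' SH T' vd).
    + apply surj_eq; auto.
  - intros [xa sa] [xb sb] _ _. unfold composable, arr_s, arr_r, act_pt; simpl.
    apply ueq_transfer; auto.
    + intro n. apply (Cx_shift Q H H' n (n + wordlen Q sa) (wordlen Q sa)); auto.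
      apply wordlen_spec; auto.
  - intros [xa sa] [xb sb] _ _ _. unfold arr_mul, Fm; simpl. split.
    + intro n. apply BI_refl; auto.
    + exists 0. intros; apply cs_refl; auto.
  - apply open_pre; auto.
  - apply open_img; auto.
Qed.
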